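(* Let $G\subset\mathbb R^r$ be a lattice of rank $r$ acting on $C(\mathbb R^r)$ by $f^g(x)=f(x+g)$, and let $n\in\mathbb Z_+$. A function $p\in C(\mathbb R^r)$ is a $G$-periodic polynomial of degree at most $n$ if and only if $D^{n+1}p=0$; that is, $P_n^G=\mathcal P_n(G,C(\mathbb R^r))$.
   Context: $C(\mathbb R^r)$ is the algebra of continuous (real or complex) functions on $\mathbb R^r$; $x_1,\dots,x_r$ are the standard coordinates. $C^G$ is the subalgebra of $G$-periodic continuous functions ($f(x+g)=f(x)$ for all $g\in G$). $P_n^G$ is the space of polynomials in $x_1,\dots,x_r$ of degree at most $n$ with coefficients in $C^G$. $\mathcal C^0(G,A)=A$; for $n\ge1$, $\mathcal C^n(G,A)$ is the space of functions $G^n\to A$ vanishing whenever some argument is $0$; $(d_nc)(g_1,\dots,g_n)=[c(g_1,\dots,g_{n-1})]^{g_n}-c(g_1,\dots,g_{n-1})$; $D^0=\mathrm{id}$, $D^n=d_nD^{n-1}$; $\mathcal P_n(G,A)=\ker D^{n+1}$. *)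

(* Defs.v *)
From HB Require Import structures.
From mathcomp Require Import all_boot all_order all_algebra.
From mathcomp Require Import all_classical all_reals all_analysis.
Set Implicit Arguments. Unset Strict Implicit. Unset Printing Implicit Defensive.
Import Order.TTheory GRing.Theory Num.Theory.
Import numFieldTopology.Exports numFieldNormedType.Exports.
Local Open Scope ring_scope.
Local Open Scope classical_set_scope.

Section Defs.
Variables (R : realType) (r : nat).

Definition is_full_lattice (G : set 'rV[R]_r) : Prop :=
  exists b : 'M[R]_r, b \in unitmx /\
    G = [set x | exists k : 'rV[int]_r, x = map_mx (fun z : int => z%:~R) k *m b].

Definition periodic (G : set 'rV[R]_r) (f : 'rV[R]_r -> R) : Prop :=
  forall g, G g -> forall x, f (x + g) = f x.

Local Notation midx n := {ffun 'I_r -> 'I_n.+1}.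

Definition monomial (n : nat) (a : {ffun 'I_r -> 'I_n.+1}) (x : 'rV[R]_r) : R :=
  \prod_(i < r) (x ord0 i) ^+ (a i : nat).

Definition periodic_poly (G : set 'rV[R]_r) (n : nat) (p : 'rV[R]_r -> R) : Prop :=
  exists c : {ffun 'I_r -> 'I_n.+1} -> ('rV[R]_r -> R),
    (forall a, continuous (c a) /\ periodic G (c a)) /\
    forall x, p x = \sum_(a : midx n | (\sum_(i < r) (a i : nat) <= n)%N)
                      c a x * monomial a x.

(* The iterated difference D^k : A -> C^k(G, A), A = C(R^r), with action
   f^g (x) = f (x + g).  The arguments g_1, ..., g_k are gs 0, ..., gs (k-1):
   (D^{k+1} p)(g_1..g_{k+1}) = (D^k p (g_1..g_k))^{g_{k+1}} - D^k p (g_1..g_k). *)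
Fixpoint Dop (k : nat) (p : 'rV[R]_r -> R) (gs : nat -> 'rV[R]_r) : 'rV[R]_r -> R :=
  match k with
  | 0 => p
  | k'.+1 => fun x => Dop k' p gs (x + gs k') - Dop k' p gs x
  end.

Definition in_calP (G : set 'rV[R]_r) (n : nat) (p : 'rV[R]_r -> R) : Prop :=
  forall gs : nat -> 'rV[R]_r, (forall i, (i <= n)%N -> G (gs i)) ->
    Dop n.+1 p gs = (fun _ => 0).

End Defs.

(* Main.v *)
Require Import Defs.
From HB Require Import structures.
From mathcomp Require Import all_boot all_order all_algebra.
From mathcomp Require Import all_classical all_reals all_analysis.
From mathcomp Require Import ring.
Import Order.TTheory GRing.Theory Num.Theory.
Import numFieldTopology.Exports numFieldNormedType.Exports.
Local Open Scope ring_scope.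
Local Open Scope classical_set_scope.

Section S1.
Variables (R : realType) (r : nat) (G : set 'rV[R]_r).

Definition dif (v : 'rV[R]_r) (f : 'rV[R]_r -> R) : 'rV[R]_r -> R :=
  fun x => f (x + v) - f x.

Inductive SP : nat -> ('rV[R]_r -> R) -> Prop :=
| Sc n c : continuous c -> Defs.periodic G c -> SP n c
| Sadd n f h : SP n f -> SP n h -> SP n (fun x => f x + h x)
| Smul m n f h : SP m f -> SP n h -> SP (m + n) (fun x => f x * h x)
| Sx i : SP 1 (fun x => x ord0 i)
| Smono m n f : (m <= n)%N -> SP m f -> SP n f.
Arguments Sc {n c}.
Arguments Sadd {n f h}.
Arguments Smul {m n f h}.
Arguments Smono {m n f}.

Lemma cont_tr (f : 'rV[R]_r -> R) (h : 'rV[R]_r) : continuous f -> continuous (fun x : 'rV[R]_r => f (x + h)).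
Proof.
move=> cf x; apply: continuous_comp; last exact: cf.
apply: continuousD; first exact: cvg_id.
exact: cst_continuous.
Qed.

Lemma cont_dif (f : 'rV[R]_r -> R) (v : 'rV[R]_r) : continuous f -> continuous (dif v f).
Proof.
move=> cf x; rewrite /dif.
have ct : continuous (fun x : 'rV[R]_r => f (x + v)).
  move=> y; apply: continuous_comp; last exact: cf.
  apply: continuousD; first exact: cvg_id.
  exact: cst_continuous.
exact: (@continuousB _ _ _ _ _ x (ct x) (cf x)).
Qed.

Lemma SP_cont n f : SP n f -> continuous f.
Proof.
elim=> {n f}.
- by [].
- move=> n f h _ cf _ ch x; exact: (@continuousD _ _ _ f h x (cf x) (ch x)).
- move=> m n f h _ cf _ ch x; exact: (@continuousM _ _ f h x (cf x) (ch x)).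
- move=> i; exact: coord_continuous.
- by [].
Qed.

Lemma SPconst n (a : R) : SP n (fun _ => a).
Proof. by apply: Sc; [exact: cst_continuous | by []]. Qed.

Lemma SPscale n (a : R) f : SP n f -> SP n (fun x => a * f x).
Proof. by move=> hf; have := Smul (SPconst 0 a) hf; rewrite add0n. Qed.
Arguments SPscale {n} a {f}.

Lemma SPext n f g : SP n f -> f =1 g -> SP n g.
Proof. by move=> hf /funext <-. Qed.
Arguments SPext {n f g}.

Lemma SPsub n f h : SP n f -> SP n h -> SP n (fun x => f x - h x).
Proof.
move=> hf hh; apply: SPext (Sadd hf (SPscale (-1) hh)) _ => x /=.
by rewrite mulN1r.
Qed.
Arguments SPsub {n f h}.

Lemma SPsum (I : Type) (s : seq I) (P : pred I) (F : I -> 'rV[R]_r -> R) n :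
  (forall i, P i -> SP n (F i)) -> SP n (fun x => \sum_(i <- s | P i) F i x).
Proof.
move=> hF; elim: s => [|i s IH].
  by apply: SPext (SPconst n 0) _ => x; rewrite big_nil.
case Pi: (P i).
  by apply: SPext (Sadd (hF i Pi) IH) _ => x; rewrite big_cons Pi.
by apply: SPext IH _ => x; rewrite big_cons Pi.
Qed.

Lemma SPprod (I : Type) (s : seq I) (d : I -> nat) (F : I -> 'rV[R]_r -> R) :
  (forall i, SP (d i) (F i)) -> SP (\sum_(i <- s) d i) (fun x => \prod_(i <- s) F i x).
Proof.
move=> hF; elim: s => [|i s IH].
  by rewrite big_nil; apply: SPext (SPconst 0 1) _ => x; rewrite big_nil.
rewrite big_cons; apply: SPext (Smul (hF i) IH) _ => x.
by rewrite big_cons.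
Qed.

Lemma SPtr n f h : SP n f -> SP n (fun x => f (x + h)).
Proof.
elim=> {n f}.
- move=> n c cc pc; apply: Sc; [exact: cont_tr | rewrite /Defs.periodic].
  by move=> g Gg x; rewrite addrAC (pc g Gg).
- move=> n f g _ hf _ hg; exact: Sadd hf hg.
- move=> m n f g _ hf _ hg; exact: Smul hf hg.
- move=> i; apply: SPext (Sadd (Sx i) (SPconst 1 (h ord0 i))) _ => x.
  by rewrite mxE.
- move=> m n f mn _ hf; exact: Smono mn hf.
Qed.
Arguments SPtr {n f} h.

Lemma SPdif n f g : G g -> SP n f -> SP n.-1 (dif g f) /\ (n = 0%N -> dif g f = fun _ => 0).
Proof.
move=> Gg; elim=> {n f}.
- move=> n c cc pc.
  have E : dif g c = fun _ => 0 by apply: funext => x; rewrite /dif (pc g Gg) subrr.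
  by rewrite E; split=> //; exact: SPconst.
- move=> n f h _ [hf zf] _ [hh zh]; split.
    by apply: SPext (Sadd hf hh) _ => x; rewrite /dif addrACA opprD.
  move=> n0; apply: funext => x.
  have A := congr1 (fun F => F x) (zf n0); have B := congr1 (fun F => F x) (zh n0).
  by rewrite /dif /= in A B *; rewrite opprD addrACA A B addr0.
- move=> m n f h sf [hf zf] sh [hh zh].
  have E : dif g (fun x => f x * h x) =1
     (fun x => dif g f x * h (x + g) + f x * dif g h x).
    by move=> x; rewrite /dif mulrBl mulrBr addrA subrK.
  case: m sf hf zf => [|m] sf hf zf.
    have Zx : forall x, dif g f x = 0 by move=> x; rewrite (zf erefl).
    split.
      by apply: SPext (Smul sf hh) _ => x; rewrite E Zx mul0r add0r.
    move=> n0; apply: funext => x; rewrite E Zx (zh n0) mul0r add0r /=.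
    by rewrite mulr0.
  case: n sh hh zh => [|n] sh hh zh.
    have Zx : forall x, dif g h x = 0 by move=> x; rewrite (zh erefl).
    split=> //; rewrite addn0.
    have := Smul hf (SPtr g sh); rewrite addn0 => H.
    by apply: SPext H _ => x; rewrite E Zx mulr0 addr0.
  split=> //.
  apply: SPext _ (fun x => esym (E x)).
  apply: Sadd.
    by apply: Smono (Smul hf (SPtr g sh)); rewrite addSn addnS.
  by apply: Smono (Smul sf hh); rewrite addSn addnS.
- move=> i; split=> //.
  apply: SPext (SPconst 0 (g ord0 i)) _ => x.
  by rewrite /dif mxE addrAC subrr add0r.
- move=> m n f mn _ [hf zf]; split.
    by apply: Smono hf; rewrite -!subn1 leq_sub2r.
  by move=> n0; apply: zf; move: mn; rewrite n0 leqn0 => /eqP.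
Qed.
Arguments SPdif {n f g}.


Lemma SPdop n p gs : SP n p -> (forall i, (i <= n)%N -> G (gs i)) ->
  forall k, (k <= n)%N -> SP (n - k) (Dop k p gs).
Proof.
move=> hp hgs; elim=> [|k IH] lk; first by rewrite subn0.
have [H _] := SPdif (hgs k (ltnW lk)) (IH (ltnW lk)).
by rewrite subnS.
Qed.
Arguments SPdop {n p gs}.

Lemma SP_calP n p : SP n p -> in_calP G n p.
Proof.
move=> hp gs hgs.
have H := SPdop hp hgs n (leqnn n); rewrite subnn in H.
by have [_ Z] := SPdif (hgs n (leqnn n)) H; exact: Z.
Qed.

Lemma SPpow i k : SP k (fun x : 'rV[R]_r => x ord0 i ^+ k).
Proof.
elim: k => [|k IH]; first by apply: SPext (SPconst 0 1) _ => x; rewrite expr0.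
by apply: SPext (Smul (Sx i) IH) _ => x; rewrite exprS.
Qed.

Lemma pp_SP n p : periodic_poly G n p -> SP n p.
Proof.
move=> [c [hc /funext ->]].
apply: SPsum => a ha.
have := Smul (Sc (hc a).1 (hc a).2) (@SPprod _ (index_enum 'I_r) (fun i => a i : nat) (fun i x => x ord0 i ^+ a i) (fun i => SPpow i (a i))).
move=> H; exact: Smono ha (H 0%N). Qed.


Definition mono_s (s : seq 'I_r) (x : 'rV[R]_r) : R := \prod_(j <- s) x ord0 j.

Definition goodt n (e : ('rV[R]_r -> R) * seq 'I_r) : Prop :=
  continuous e.1 /\ Defs.periodic G e.1 /\ (size e.2 <= n)%N.

Fixpoint goodl n (l : seq (('rV[R]_r -> R) * seq 'I_r)) : Prop :=
  match l with [::] => True | e :: l' => goodt n e /\ goodl n l' end.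

Definition evl (l : seq (('rV[R]_r -> R) * seq 'I_r)) (x : 'rV[R]_r) : R :=
  \sum_(e <- l) e.1 x * mono_s e.2 x.

Definition NF n f := exists l, goodl n l /\ f = evl l.

Lemma goodl_cat n l1 l2 : goodl n l1 -> goodl n l2 -> goodl n (l1 ++ l2).
Proof. by elim: l1 => [|e l IH] //= [? ?] ?; split=> //; apply: IH. Qed.

Lemma goodl_mono m n l : (m <= n)%N -> goodl m l -> goodl n l.
Proof.
move=> mn; elim: l => [|e l IH] //= [[h1 [h2 h3]] ?]; split; last exact: IH.
by split=> //; split=> //; exact: leq_trans mn.
Qed.

Definition mulT (e1 e2 : ('rV[R]_r -> R) * seq 'I_r) :=
  (fun x => e1.1 x * e2.1 x, e1.2 ++ e2.2).

Lemma goodl_mul m n l1 l2 : goodl m l1 -> goodl n l2 ->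
  goodl (m + n) [seq mulT e1 e2 | e1 <- l1, e2 <- l2].
Proof.
elim: l1 => [|e1 l1 IH] //= [[c1 [p1 s1]] g1] g2.
apply: goodl_cat; last exact: IH.
clear IH g1.
elim: l2 g2 => [|e2 l2 IH2] //= [[c2 [p2 s2]] g2]; split; last exact: IH2.
split; first by move=> x; exact: (@continuousM _ _ _ _ x (c1 x) (c2 x)).
split; first by move=> g Gg x /=; rewrite (p1 g Gg) (p2 g Gg).
by rewrite size_cat leq_add.
Qed.

Lemma SP_NF n f : SP n f -> NF n f.
Proof.
elim=> {n f}.
- move=> n c cc pc; exists [:: (c, [::])]; split=> /=; first by split=> //; split.
  by apply: funext => x; rewrite /evl big_cons big_nil /mono_s big_nil mulr1 addr0.
- move=> n f h _ [l1 [g1 ->]] _ [l2 [g2 ->]]; exists (l1 ++ l2); split.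
    exact: goodl_cat.
  by apply: funext => x; rewrite /evl big_cat.
- move=> m n f h _ [l1 [g1 ->]] _ [l2 [g2 ->]].
  exists [seq mulT e1 e2 | e1 <- l1, e2 <- l2]; split; first exact: goodl_mul.
  apply: funext => x; rewrite /evl big_allpairs_dep mulr_suml.
  apply: eq_bigr => e1 _; rewrite mulr_sumr; apply: eq_bigr => e2 _.
  by rewrite /mulT /mono_s /= big_cat /=; rewrite mulrACA.
- move=> i; exists [:: (fun _ => 1, [:: i])]; split=> /=.
    split=> //; split; first exact: cst_continuous.
    by split.
  by apply: funext => x; rewrite /evl /mono_s !big_cons !big_nil mul1r mulr1 addr0.
- move=> m n f mn _ [l [g ->]]; exists l; split=> //; exact: goodl_mono g.
Qed.


Definition cntf n (s : seq 'I_r) : {ffun 'I_r -> 'I_n.+1} :=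
  [ffun i => inord (count_mem i s)].

Lemma sum_ind (j : 'I_r) : (\sum_(i < r) (j == i) = 1)%N.
Proof.
rewrite (bigD1 j) //= eqxx big1 // => i /negbTE.
by rewrite eq_sym => ->.
Qed.

Lemma sum_count (s : seq 'I_r) : (\sum_(i < r) count_mem i s = size s)%N.
Proof.
elim: s => [|j s IH] /=; first by rewrite big1.
by rewrite big_split /= IH sum_ind add1n.
Qed.

Lemma cntfE n s i : (size s <= n)%N -> (cntf n s i : nat) = count_mem i s.
Proof.
move=> hs; rewrite ffunE inordK // ltnS.
exact: leq_trans (count_size _ _) hs.
Qed.

Lemma prod_count (s : seq 'I_r) (x : 'rV[R]_r) :
  \prod_(i < r) x ord0 i ^+ count_mem i s = mono_s s x.
Proof.
elim: s => [|j s IH]; rewrite /mono_s.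
  by rewrite big_nil big1 // => i _; rewrite expr0.
rewrite big_cons -[X in _ * X]IH -[RHS]/(_ * _).
rewrite (eq_bigr (fun i => x ord0 i ^+ (j == i) * x ord0 i ^+ count_mem i s)); last first.
  by move=> i _ /=; rewrite exprD.
rewrite big_split /=; congr (_ * _).
rewrite (bigD1 j) //= eqxx expr1 big1 ?mulr1 // => i /negbTE.
by rewrite eq_sym => ->; rewrite expr0.
Qed.

Lemma mono_cnt n s x : (size s <= n)%N -> Defs.monomial (cntf n s) x = mono_s s x.
Proof.
move=> hs; rewrite /Defs.monomial -prod_count; apply: eq_bigr => i _.
by rewrite cntfE.
Qed.

Lemma NF_pp n f : NF n f -> periodic_poly G n f.
Proof.
move=> [l [gl ->]].
exists (fun a x => \sum_(e <- l | cntf n e.2 == a) e.1 x); split.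
  move=> a; elim: l gl => [|e l IH] /=.
    move=> _; have -> : (fun x : 'rV[R]_r => \sum_(e <- [::] : seq (('rV[R]_r -> R) * seq 'I_r) | cntf n e.2 == a) e.1 x) = (fun _ => 0).
      by apply: funext => x; rewrite big_nil.
    by split; [exact: cst_continuous | by []].
  move=> [[ce [pe se]] gl]; have [IHc IHp] := IH gl.
  have -> : (fun x : 'rV[R]_r => \sum_(e' <- e :: l | cntf n e'.2 == a) e'.1 x) =
     (fun x : 'rV[R]_r => (if cntf n e.2 == a then e.1 x else 0) + \sum_(e' <- l | cntf n e'.2 == a) e'.1 x).
    by apply: funext => x; rewrite big_cons; case: ifP => _; rewrite ?add0r.
  case: (cntf n e.2 == a); split.
  - move=> x; exact: (@continuousD _ _ _ _ _ x (ce x) (IHc x)).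
  - by rewrite /Defs.periodic => g Gg x /=; rewrite (IHp g Gg x) (pe g Gg x).
  - move=> x; exact: (@continuousD _ _ _ _ _ x (@cst_continuous _ _ 0 x) (IHc x)).
  - by rewrite /Defs.periodic => g Gg x /=; rewrite (IHp g Gg x).
move=> x; elim: l gl => [|e l IH].
  rewrite /=.
  by move=> _; rewrite /evl big_nil big1 // => a _; rewrite big_nil mul0r.
move=> [[ce [pe se]] gl].
rewrite /evl big_cons -/(evl l x).
rewrite (eq_bigr (fun a => (if cntf n e.2 == a then e.1 x * Defs.monomial a x else 0) + (\sum_(e' <- l | cntf n e'.2 == a) e'.1 x) * Defs.monomial a x)); last first.
  by move=> a _; rewrite big_cons; case: ifP => _; rewrite ?mulrDl ?mul0r ?add0r.
rewrite big_split /= -(IH gl); congr (_ + _).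
have hc : (\sum_(i < r) (cntf n e.2 i : nat) <= n)%N.
  by rewrite (eq_bigr (fun i => count_mem i e.2)) ?sum_count // => i _; rewrite cntfE.
rewrite (bigD1 (cntf n e.2)) //= eqxx big1 ?addr0; first by rewrite mono_cnt.
by move=> a /andP[_ /negbTE]; rewrite eq_sym => ->.
Qed.


Section Hard.
Variables (b : 'M[R]_r).
Hypothesis hb : b \in unitmx.
Hypothesis hG : G = [set x | exists k : 'rV[int]_r, x = map_mx (fun z : int => z%:~R) k *m b].

Definition e (i : 'I_r) : 'rV[R]_r := row i b.

Lemma Ge i : G (e i).
Proof.
rewrite hG; exists 'e_i; rewrite /e rowE; congr (_ *m _).
apply/matrixP => a j; rewrite !mxE.
by case: (_ && _).
Qed.

Lemma G0 : G 0.
Proof.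
rewrite hG; exists 0; apply/esym; rewrite (_ : map_mx _ _ = 0) ?mul0mx //.
by apply/matrixP => a j; rewrite !mxE.
Qed.

Lemma per_nat (f : 'rV[R]_r -> R) v : (forall x, f (x + v) = f x) ->
  forall m x, f (x + m%:R *: v) = f x.
Proof.
move=> hv; elim=> [|m IH] x; first by rewrite scale0r addr0.
by rewrite mulrSr scalerDl scale1r addrA hv IH.
Qed.
Arguments per_nat {f v}.

Lemma per_int (f : 'rV[R]_r -> R) v : (forall x, f (x + v) = f x) ->
  forall z : int, forall x, f (x + z%:~R *: v) = f x.
Proof.
move=> hv [m|m] x.
  by rewrite -pmulrn (per_nat hv).
rewrite NegzE mulrNz scaleNr -pmulrn.
by rewrite -{2}(subrK (m.+1%:R *: v) x) (per_nat hv).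
Qed.
Arguments per_int {f v}.

Lemma per_basis (f : 'rV[R]_r -> R) : (forall i x, f (x + e i) = f x) ->
  forall g, G g -> forall x, f (x + g) = f x.
Proof.
move=> hf g; rewrite hG => -[k ->] x; rewrite mulmx_sum_row.
elim: (index_enum _) x => [|i s IH] x; first by rewrite big_nil addr0.
rewrite big_cons addrA.
rewrite (_ : map_mx _ k 0 i = (k 0 i)%:~R); last by rewrite mxE.
by rewrite IH (per_int (hf i)).
Qed.
Arguments per_basis {f}.

Definition tc (j : 'I_r) (x : 'rV[R]_r) : R := (x *m invmx b) ord0 j.

Lemma tc_shift i j x : tc j (x + e i) = tc j x + (i == j)%:R.
Proof.
rewrite /tc mulmxDl mxE; congr (_ + _).
by rewrite /e -row_mul mulmxV // mxE mxE.
Qed.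


Fixpoint bin (t : R) (k : nat) : R :=
  match k with 0 => 1 | k'.+1 => bin t k' * (t - k'%:R) / k'.+1%:R end.

Lemma binS t k : bin (t + 1) k.+1 = bin t k.+1 + bin t k.
Proof.
elim: k => [|k IH].
  by rewrite /= !mul1r !subr0 !divr1 addrC.
rewrite -[LHS]/(bin (t+1) k.+1 * ((t + 1) - k.+1%:R) / k.+2%:R) IH.
rewrite -[bin t k.+2]/(bin t k.+1 * (t - k.+1%:R) / k.+2%:R).
rewrite -[bin t k.+1]/(bin t k * (t - k%:R) / k.+1%:R).
have h1 : (k.+1%:R : R) != 0 by rewrite pnatr_eq0.
have h2 : (k.+2%:R : R) != 0 by rewrite pnatr_eq0.
move: h1 h2; rewrite !mulrSr => h1 h2.
field.
by rewrite h1 h2.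
Qed.

Lemma tc_SP j : SP 1 (tc j).
Proof.
apply: SPext (@SPsum _ (index_enum 'I_r) xpredT (fun l x => x ord0 l * invmx b l j) 1 _) _.
  move=> l _; have := Smul (Sx l) (SPconst 0 (invmx b l j)).
  by rewrite addn0.
by move=> x; rewrite /tc mxE.
Qed.

Lemma bin_SP j k : SP k (fun x => bin (tc j x) k).
Proof.
elim: k => [|k IH]; first exact: SPconst.
have h : SP 1 (fun x => (tc j x - k%:R) / k.+1%:R).
  apply: SPext (SPscale (k.+1%:R)^-1 (SPsub (tc_SP j) (SPconst 1 k%:R))) _ => x.
  by rewrite mulrC.
have := Smul IH h; rewrite addn1 => H.
by apply: SPext H _ => x /=; rewrite mulrA.
Qed.

Definition B (be : 'I_r -> nat) (x : 'rV[R]_r) : R := \prod_(i < r) bin (tc i x) (be i).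

Lemma B_SP be : SP (\sum_(i < r) be i) (B be).
Proof. exact: (@SPprod _ (index_enum 'I_r) be (fun i x => bin (tc i x) (be i)) (fun i => bin_SP i (be i))). Qed.

Definition decr (be : 'I_r -> nat) (i : 'I_r) : 'I_r -> nat :=
  fun j => if j == i then (be j).-1 else be j.

Lemma B_dif be i : dif (e i) (B be) = if (0 < be i)%N then B (decr be i) else (fun _ => 0).
Proof.
apply: funext => x; rewrite /dif /B (bigD1 i) //= [X in _ - X](bigD1 i) //=.
rewrite (eq_bigr (fun j => bin (tc j x) (be j))); last first.
  by move=> j /negbTE ji; rewrite tc_shift eq_sym ji addr0.
rewrite tc_shift eqxx -mulrBl.
case E: (be i) => [|k].
  by rewrite /= subrr mul0r.
rewrite binS addrAC subrr add0r ltn0Sn /B [RHS](bigD1 i) //= /decr eqxx E /=; congr (_ * _).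
by apply: eq_bigr => j /negbTE ->.
Qed.


Fixpoint Dseq (s : seq 'I_r) (q : 'rV[R]_r -> R) : 'rV[R]_r -> R :=
  match s with [::] => q | i :: s' => dif (e i) (Dseq s' q) end.

Lemma dif_comm u v (q : 'rV[R]_r -> R) : dif u (dif v q) = dif v (dif u q).
Proof.
apply: funext => x; rewrite /dif (addrAC x v u); ring.
Qed.

Lemma Dseq_comm s v q : Dseq s (dif v q) = dif v (Dseq s q).
Proof. by elim: s => [|i s IH] //=; rewrite IH dif_comm. Qed.

Lemma Dseq_cat s1 s2 q : Dseq (s1 ++ s2) q = Dseq s1 (Dseq s2 q).
Proof. by elim: s1 => [|i s IH] //=; rewrite IH. Qed.

Lemma Dseq_swap s1 s2 q : Dseq s1 (Dseq s2 q) = Dseq s2 (Dseq s1 q).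
Proof. by elim: s2 => [|i s IH] //=; rewrite Dseq_comm IH. Qed.

Lemma Dseq_perm s1 s2 q : perm_eq s1 s2 -> Dseq s1 q = Dseq s2 q.
Proof.
move=> hp.
apply: (@catCA_perm_ind _ (fun s => Dseq s1 q = Dseq s q) _ s1 s2 hp (erefl _)).
move=> a1 a2 a3; rewrite !Dseq_cat => ->; by rewrite Dseq_swap.
Qed.

Lemma Dseq_sub s f h : Dseq s (fun x => f x - h x) = (fun x => Dseq s f x - Dseq s h x).
Proof.
elim: s => [|i s IH] //=; rewrite IH; apply: funext => x; rewrite /dif; ring.
Qed.

Lemma Dseq_sum (I : Type) (l : seq I) (P : pred I) (F : I -> 'rV[R]_r -> R) s :
  Dseq s (fun x => \sum_(a <- l | P a) F a x) = (fun x => \sum_(a <- l | P a) Dseq s (F a) x).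
Proof.
elim: s => [|i s IH] //=; rewrite IH; apply: funext => x; rewrite /dif.
by rewrite -sumrB.
Qed.

Lemma Dseq_mulper s (d F : 'rV[R]_r -> R) : (forall i x, d (x + e i) = d x) ->
  Dseq s (fun x => d x * F x) = (fun x => d x * Dseq s F x).
Proof.
move=> hd; elim: s => [|i s IH] //=; rewrite IH; apply: funext => x; rewrite /dif.
by rewrite hd mulrBr.
Qed.

Lemma Dseq_cont s q : continuous q -> continuous (Dseq s q).
Proof.
move=> cq; elim: s => [|i s IH] //= x.
exact: cont_dif.
Qed.

Lemma Dop_cons k q gs : Dop k.+1 q gs = Dop k (dif (gs 0%N) q) (fun j => gs j.+1).
Proof. by elim: k => [|k IH] //; rewrite -[LHS]/(dif (gs k.+1) (Dop k.+1 q gs)) IH. Qed.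

Lemma Dseq_Dop s q : Dseq s q = Dop (size s) q (fun j => nth 0 (map e s) j).
Proof.
elim: s q => [|i s IH] q //.
by rewrite Dop_cons /= -IH Dseq_comm.
Qed.

Lemma G_nth s j : G (nth 0 (map e s) j).
Proof.
elim: s j => [|i s IH] j; first by rewrite nth_nil; exact: G0.
by case: j => [|j] /=; [exact: Ge | exact: IH].
Qed.

Lemma calP_Dseq n p : in_calP G n p -> forall s, size s = n.+1 -> Dseq s p = (fun _ => 0).
Proof.
move=> hp s hs; rewrite Dseq_Dop hs; apply: hp => i _; exact: G_nth.
Qed.

Lemma dif0 v (q : 'rV[R]_r -> R) : dif v q = (fun _ => 0) -> forall x, q (x + v) = q x.
Proof.
move=> h x; have := congr1 (fun F => F x) h; rewrite /dif /= => /eqP.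
by rewrite subr_eq0 => /eqP.
Qed.

Lemma Dseq_calP k : forall q, (forall s, size s = k -> Dseq s q = (fun _ => 0)) ->
  forall gs, (forall i, (i < k)%N -> G (gs i)) -> Dop k q gs = (fun _ => 0).
Proof.
elim: k => [|k IH] q hq gs hgs; first exact: (hq [::]).
rewrite Dop_cons; apply: IH; last by move=> i hi; apply: hgs.
move=> s hs; rewrite Dseq_comm.
have per : forall g, G g -> forall x, Dseq s q (x + g) = Dseq s q x.
  by apply: per_basis => i; apply: dif0; apply: (hq (i :: s)); rewrite /= hs.
apply: funext => x; rewrite /dif per ?subrr //; exact: hgs.
Qed.


Lemma Bext be be' : be =1 be' -> B be = B be'.
Proof. by move=> /funext ->. Qed.

Lemma Dseq_B s be : Dseq s (B be) =
  if [forall j, count_mem j s <= be j]%N then B (fun j => be j - count_mem j s)%N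
  else (fun _ => 0).
Proof.
elim: s => [|i s IH] /=.
  have -> : [forall j, count_mem j [::] <= be j]%N by apply/forallP.
  by apply: Bext => j; rewrite subn0.
rewrite IH; case: ifP => hle; last first.
  have -> : [forall j, ((i == j) + count_mem j s <= be j)%N] = false.
    apply/negbTE/negP => /forallP H; move/negP: hle; apply; apply/forallP => j.
    exact: leq_trans (leq_addl _ _) (H j).
  by apply: funext => x; rewrite /dif subrr.
rewrite B_dif.
have -> : [forall j, ((i == j) + count_mem j s <= be j)%N] = (0 < be i - count_mem i s)%N.
  move/forallP: hle => hle.
  apply/forallP/idP => [H|H j].
    by move: (H i); rewrite eqxx add1n subn_gt0.
  case: (eqVneq i j) => [<-|ne]; first by rewrite add1n -subn_gt0.
  by rewrite add0n.
case: ifP => // _; apply: Bext => j; rewrite /decr.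
case: (eqVneq j i) => [->|ne]; first by rewrite add1n subnS.
by [].
Qed.

Lemma Dseq_B_top s be : size s = (\sum_(j < r) be j)%N ->
  Dseq s (B be) = (fun _ => if [forall j, count_mem j s == be j] then 1 else 0).
Proof.
move=> hs; rewrite Dseq_B; case: ifP => hle; last first.
  case: ifP => // /forallP H; move/negP: hle; case; apply/forallP => j.
  by rewrite (eqP (H j)).
have hz : forall j, (be j - count_mem j s = 0)%N.
  move/forallP: hle => hle.
  have : (\sum_(j < r) (be j - count_mem j s) + \sum_(j < r) count_mem j s = \sum_(j < r) be j)%N.
    by rewrite -big_split; apply: eq_bigr => j _ /=; rewrite subnK.
  rewrite sum_count -hs -{2}(add0n (size s)) => /eqP; rewrite eqn_add2r => /eqP /eqP.
  by rewrite sum_nat_eq0 => /forallP H j; apply/eqP/H.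
have -> : [forall j, count_mem j s == be j].
  apply/forallP => j; move/forallP: hle => /(_ j) hj.
  by rewrite eqn_leq hj /= -subn_eq0 hz.
apply: funext => x; rewrite /B big1 // => j _.
by rewrite hz.
Qed.


Definition seqof (be : 'I_r -> nat) : seq 'I_r :=
  flatten [seq nseq (be i) i | i <- index_enum 'I_r].

Lemma count_seqof be j : count_mem j (seqof be) = be j.
Proof.
have H : forall l, count_mem j (flatten [seq nseq (be i) i | i <- l]) = (\sum_(i <- l) (i == j) * be i)%N.
  elim=> [|i l IH]; first by rewrite big_nil.
  by rewrite /= count_cat count_nseq IH big_cons.
rewrite /seqof H (bigD1 j) //= eqxx mul1n big1 ?addn0 // => i /negbTE ->.
by rewrite mul0n.
Qed.

Lemma size_seqof be : size (seqof be) = (\sum_(j < r) be j)%N.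
Proof. by rewrite -sum_count; apply: eq_bigr => j _; rewrite count_seqof. Qed.

Lemma hard n : forall p, continuous p ->
  (forall s, size s = n.+1 -> Dseq s p = (fun _ => 0)) -> SP n p.
Proof.
elim: n => [|n IH] p cp hp.
  apply: Sc cp _; apply: per_basis => i; apply: dif0; exact: (hp [:: i]).
set N := n.+1.
pose d (be : {ffun 'I_r -> 'I_N.+1}) := Dseq (seqof (fun j => be j : nat)) p.
pose P := fun x => \sum_(be : {ffun 'I_r -> 'I_N.+1} | (\sum_(j < r) (be j : nat) == N)%N)
   d be x * B (fun j => be j : nat) x.
have dper : forall be : {ffun 'I_r -> 'I_N.+1}, (\sum_(j < r) (be j : nat) = N)%N -> forall i x, d be (x + e i) = d be x.
  move=> be hbe i; apply: dif0; apply: (hp (i :: _)).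
  by rewrite /= size_seqof hbe.
have SPP : SP N P.
  apply: SPsum => be /eqP hbe.
  have H := Smul (@Sc 0 _ (Dseq_cont _ _ cp) (per_basis (dper be hbe))) (B_SP (fun j => be j : nat)).
  by apply: Smono H; rewrite add0n hbe.
have cP := @SP_cont _ _ SPP.
have key : forall s, size s = N -> Dseq s P = Dseq s p.
  move=> s hs; rewrite /P Dseq_sum; apply: funext => x.
  rewrite (eq_bigr (fun be => d be x * (if [forall j, count_mem j s == be j] then 1 else 0))); last first.
    move=> be /eqP hbe; rewrite (Dseq_mulper _ _ _ (dper be hbe)) /=.
    by rewrite Dseq_B_top // hs hbe.
  have hsN : (size s <= N)%N by rewrite hs.
  rewrite (bigD1 (cntf N s)) /=; last first.
    by rewrite (eq_bigr (fun j => count_mem j s)) ?sum_count ?hs // => j _; rewrite cntfE.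
  have -> : [forall j, count_mem j s == cntf N s j] by apply/forallP => j; rewrite cntfE.
  rewrite mulr1 big1 ?addr0; last first.
    move=> be /andP[_ ne]; case: ifP; rewrite ?mulr0 // => /forallP H.
    move/negP: ne; case; apply/eqP/ffunP => j; apply: val_inj => /=.
    by rewrite cntfE // (eqP (H j)).
  rewrite /d; congr (_ x); apply: Dseq_perm.
  by rewrite /perm_eq; apply/allP => y _ /=; rewrite count_seqof cntfE.
have hp' : forall s, size s = n.+1 -> Dseq s (fun x => p x - P x) = (fun _ => 0).
  move=> s hs; rewrite Dseq_sub key //; apply: funext => x; exact: subrr.
have cpP : continuous (fun x => p x - P x).
  move=> x; exact: (@continuousB _ _ _ _ _ x (cp x) (cP x)).
have := IH _ cpP hp' => H.
apply: SPext (Sadd (Smono (leqnSn n) H) SPP) _ => x.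
by rewrite subrK.
Qed.

End Hard.
End S1.

Theorem proposition3p2 (R : realType) (r : nat) (G : set 'rV[R]_r) (n : nat)
    (hG : is_full_lattice G) (p : 'rV[R]_r -> R) (hp : continuous p) :
  periodic_poly G n p <-> in_calP G n p.
Proof.
split.
  by move=> h; apply: SP_calP; apply: pp_SP.
move=> h; apply: NF_pp; apply: SP_NF.
move: hG => [b [hb hGe]].
apply: (@hard _ _ _ b hb hGe n p hp).
exact: (@calP_Dseq _ _ _ b hGe n p h).
Qed.
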